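(* Let $(Q,\cdot)$ be a left modular magma with a right unit $e$, and let $(Q,\ast)$ be a right modular magma with a left unit $\hat{e}$. Then $(Q,\cdot,\ast)$ is a double magma, i.e. $(x\cdot y)\ast(z\cdot w)=(x\ast z)\cdot(y\ast w)$ for all $x,y,z,w\in Q$, if and only if there is an involutive automorphism $\alpha$ of $(Q,\ast)$ such that $x\ast y=y\cdot\alpha x$ for all $x,y\in Q$.
   Context: A magma $(Q,\cdot)$ is left modular if $x(yz)=z(yx)$ and right modular if $(xy)z=(zy)x$ for all $x,y,z\in Q$. A right unit is an element $r$ with $xr=x$ for all $x$; a left unit is an element $l$ with $lx=x$ for all $x$. A mapping $\alpha:Q\to Q$ is involutive if $\alpha\circ\alpha$ is the identity map. *)

(* Defs.v *)
Definition left_modular {Q : Type} (op : Q -> Q -> Q) : Prop :=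
  forall x y z : Q, op x (op y z) = op z (op y x).

Definition right_modular {Q : Type} (op : Q -> Q -> Q) : Prop :=
  forall x y z : Q, op (op x y) z = op (op z y) x.

Definition right_unit {Q : Type} (op : Q -> Q -> Q) (r : Q) : Prop :=
  forall x : Q, op x r = x.

Definition left_unit {Q : Type} (op : Q -> Q -> Q) (l : Q) : Prop :=
  forall x : Q, op l x = x.

Definition involutive_map {Q : Type} (a : Q -> Q) : Prop :=
  forall x : Q, a (a x) = x.

Definition magma_automorphism {Q : Type} (op : Q -> Q -> Q) (a : Q -> Q) : Prop :=
  (forall x y : Q, a (op x y) = op (a x) (a y)) /\
  (forall x y : Q, a x = a y -> x = y) /\
  (forall y : Q, exists x : Q, a x = y).

Definition double_magma {Q : Type} (dot star : Q -> Q -> Q) : Prop :=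
  forall x y z w : Q, star (dot x y) (dot z w) = dot (star x z) (star y w).

(* Main.v *)
Require Import Defs.

Theorem theorem5p4 (Q : Type) (dot star : Q -> Q -> Q) (e ehat : Q)
  (Hdot : left_modular dot) (He : right_unit dot e)
  (Hstar : right_modular star) (Hehat : left_unit star ehat) :
  double_magma dot star <->
  exists alpha : Q -> Q,
    magma_automorphism star alpha /\ involutive_map alpha /\
    (forall x y : Q, star x y = dot y (alpha x)).
Proof.
  assert (L1 : forall x y, dot x y = dot e (dot y x)).
  { intros x y. rewrite <- (Hdot x y e), He. reflexivity. }
  assert (L2 : forall x, dot e (dot e x) = x).
  { intros x. rewrite <- L1. apply He. }
  split.
  - intros D.
    assert (G1 : forall y z, star (star y z) ehat = star z y).
    { intros y z. rewrite <- (Hstar ehat z y), Hehat. reflexivity. }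
    assert (GG : forall x, star (star x ehat) ehat = x).
    { intros x. rewrite G1. apply Hehat. }
    assert (Le : forall w, star e w = w).
    { intros w. pose proof (D ehat e e w) as H.
      rewrite He, !Hehat in H.
      rewrite <- (L2 (star e w)), <- H, L2. reflexivity. }
    assert (Eq : e = ehat).
    { rewrite <- (GG e). rewrite Le, Hehat. reflexivity. }
    subst ehat.
    assert (K : forall x b, star x (dot e b) = dot (star x e) b).
    { intros x b. pose proof (D x e e b) as H. rewrite He, Le in H. exact H. }
    assert (K2 : forall c, star (dot e c) e = dot e (star c e)).
    { intros c. pose proof (D e c e e) as H. rewrite He, Le in H. exact H. }
    set (alpha := fun x => dot e (star x e)).
    assert (Inv : forall x, alpha (alpha x) = x).
    { intros x. unfold alpha. rewrite K2, L2. apply GG. }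
    exists alpha. split; [|split].
    + split; [|split].
      * intros x y. unfold alpha.
        rewrite (D e (star x e) e (star y e)), Le, G1.
        rewrite (Hstar x e (star y e)), GG. reflexivity.
      * intros x y H. rewrite <- (Inv x), <- (Inv y), H. reflexivity.
      * intros y. exists (alpha y). apply Inv.
    + exact Inv.
    + intros x y. unfold alpha. rewrite Hdot, <- K, L2. reflexivity.
  - intros [alpha [[Hom [Inj Sur]] [Inv H]]].
    assert (A : forall x y, alpha (dot x y) = dot (alpha x) (alpha y)).
    { intros x y. pose proof (H (alpha y) x) as Hy. rewrite Inv in Hy.
      rewrite <- Hy, Hom, Inv, H. reflexivity. }
    intros x y z w. rewrite !H, A.
    rewrite (Hdot (dot z w)), (Hdot (alpha x) z w).
    rewrite (Hdot (dot z (alpha x)) w (alpha y)). reflexivity.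
Qed.
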